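(* Let $I,J,K$ be a partition of $[m]$ and $\bm a\in\mathbb{R}^m$ with $\mathring{P}(\bm a,I,J,K)\neq\emptyset$. Then $\mathring{P}(\bm b,I,J,K)\neq\emptyset$ for every $\bm b$ in the same open face of $\delta\mathcal{A}_{\bm o}$ as $\bm a$.
   Context: Fix nonzero $\bm u_1,\dots,\bm u_m\in\mathbb{R}^n$ (repetitions and parallel vectors allowed), $U$ the $m\times n$ matrix with these rows; $U_I,\bm a_I$ denote rows/entries indexed by $I$. For a partition $I,J,K$ of $[m]$, $\mathring{P}(\bm a,I,J,K)=\{\bm x\in\mathbb{R}^n:U_I\bm x=\bm a_I,\ U_J\bm x<\bm a_J,\ U_K\bm x>\bm a_K\}$. A circuit is $C\subseteq[m]$ with $\{\bm u_i:i\in C\}$ a minimal linearly dependent indexed family; $\bm c^C$ satisfies $\sum c_i\bm u_i=\bm 0$, $c_i\ne0\iff i\in C$. The derived arrangement $\delta\mathcal{A}_{\bm o}$ consists of hyperplanes $\langle\bm c^C,\bm y\rangle=0$ in $\mathbb{R}^m$; $\bm a,\bm b$ lie in the same open face iff $\operatorname{sign}\langle\bm c^C,\bm a\rangle=\operatorname{sign}\langle\bm c^C,\bm b\rangle$ for all circuits $C$. *)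

(* Defs.v *)
From mathcomp Require Import all_boot all_order all_algebra.
From mathcomp Require Import reals.
Set Implicit Arguments. Unset Strict Implicit. Unset Printing Implicit Defensive.
Import Order.TTheory GRing.Theory Num.Theory.
Local Open Scope ring_scope.

(* The vectors u_1..u_m in R^n are the rows of U : 'M[R]_(m, n);
   points are column vectors x : 'cV[R]_n, so (U *m x) i 0 = <u_i, x>. *)

Definition inPring (R : realType) (m n : nat) (U : 'M[R]_(m, n)) (a : 'I_m -> R)
  (I J K : {set 'I_m}) (x : 'cV[R]_n) : Prop :=
  [/\ forall i, i \in I -> (U *m x) i 0 = a i,
      forall i, i \in J -> (U *m x) i 0 < a i &
      forall i, i \in K -> (U *m x) i 0 > a i].

Definition partition3 (m : nat) (I J K : {set 'I_m}) : Prop :=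
  [/\ [disjoint I & J], [disjoint I & K], [disjoint J & K] &
      I :|: J :|: K = [set: 'I_m]].

Definition lin_dep (R : realType) (m n : nat) (U : 'M[R]_(m, n)) (S : {set 'I_m}) : Prop :=
  exists c : 'I_m -> R,
    [/\ forall i, i \notin S -> c i = 0,
        exists i, c i != 0 &
        \sum_(i < m) c i *: row i U = 0].

Definition circuit (R : realType) (m n : nat) (U : 'M[R]_(m, n)) (C : {set 'I_m}) : Prop :=
  lin_dep U C /\ forall S : {set 'I_m}, S \proper C -> ~ lin_dep U S.

Definition circuit_vector (R : realType) (m n : nat) (U : 'M[R]_(m, n))
  (C : {set 'I_m}) (c : 'I_m -> R) : Prop :=
  (forall i, (c i != 0) = (i \in C)) /\ \sum_(i < m) c i *: row i U = 0.

(* a and b lie in the same open face of the derived arrangement: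
   sign <c^C, a> = sign <c^C, b> for every circuit C (and every choice of
   circuit vector c^C, which is unique up to a nonzero scalar). *)
Definition same_open_face (R : realType) (m n : nat) (U : 'M[R]_(m, n))
  (a b : 'I_m -> R) : Prop :=
  forall C c, circuit U C -> circuit_vector U C c ->
    Num.sg (\sum_(i < m) c i * a i) = Num.sg (\sum_(i < m) c i * b i).

(* Main.v *)
Require Import Defs.
From Stdlib Require Import Classical_Prop.
From mathcomp Require Import all_boot all_order all_algebra.
From mathcomp Require Import reals ring lra.
Set Implicit Arguments. Unset Strict Implicit. Unset Printing Implicit Defensive.
Import Order.TTheory GRing.Theory Num.Theory.
Local Open Scope ring_scope.

Section Core.
Variables (R : realType) (m n : nat) (U : 'M[R]_(m, n)).

Definition kerv (l : 'I_m -> R) := \sum_(i < m) l i *: row i U = 0.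
Definition dotv (l v : 'I_m -> R) := \sum_(i < m) l i * v i.

Lemma ker_Ux l (x : 'cV[R]_n) : kerv l -> \sum_i l i * (U *m x) i 0 = 0.
Proof.
move=> Hl.
have H0 : forall k, \sum_i l i * U i k = 0.
  move=> k; have := congr1 (fun M : 'rV[R]_n => M 0 k) Hl.
  rewrite /= summxE mxE => H; rewrite -[RHS]H; apply: eq_bigr => i _; rewrite !mxE //.
under eq_bigr => i _ do rewrite mxE big_distrr /=.
rewrite exchange_big /= big1 // => k _.
transitivity ((\sum_i l i * U i k) * x k 0); last by rewrite H0 mul0r.
by rewrite mulr_suml; apply: eq_bigr => i _; rewrite mulrA.
Qed.

Lemma dot_res l b (x : 'cV[R]_n) : kerv l ->
  dotv l b = \sum_i l i * (b i - (U *m x) i 0).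
Proof.
move=> Hl; rewrite /dotv.
under [RHS]eq_bigr => i _ do rewrite mulrBr.
by rewrite sumrB ker_Ux // subr0.
Qed.

Lemma min_exists (P : pred 'I_m) (F : 'I_m -> R) i0 : P i0 ->
  exists2 k, P k & forall i, P i -> F k <= F i.
Proof. by move=> Pi0; case: (arg_minP F Pi0) => k Pk Hk; exists k. Qed.

Definition AE (E : {set 'I_m}) : 'M[R]_(m, n) :=
  \matrix_(i, k) if i \in E then U i k else 0.

Lemma LA1 (E : {set 'I_m}) (v : 'rV[R]_n) :
  (exists mu : 'I_m -> R, (forall i, i \notin E -> mu i = 0) /\
       v = \sum_i mu i *: row i U) \/
  (exists d : 'cV[R]_n, (forall i, i \in E -> (U *m d) i 0 = 0) /\
       (v *m d) 0 0 != 0).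
Proof.
case: (boolP (v <= AE E)%MS) => [/submxP [D ->]|].
  left; exists (fun i => if i \in E then D 0 i else 0); split.
    by move=> i /negbTE ->.
  rewrite mulmx_sum_row; apply: eq_bigr => i _.
  case: ifP => iE; last first.
    rewrite scale0r; apply/rowP => k; rewrite !mxE iE mulr0 //.
  congr (_ *: _); apply/rowP => k; rewrite !mxE iE //.
rewrite submxE => Hne; right.
have [k Hk] : exists k, (v *m cokermx (AE E)) 0 k != 0.
  apply/existsP; move: Hne; apply: contraR; rewrite negb_exists => /forallP H.
  apply/eqP/rowP => k; rewrite [RHS]mxE; apply/eqP; move: (H k); rewrite negbK.
  by [].
exists (col k (cokermx (AE E))); split.
  move=> i iE; have := congr1 (fun M : 'M[R]_(m,n) => M i k) (mulmx_coker (AE E)).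
  rewrite /= !mxE => H; rewrite -[RHS]H; apply: eq_bigr => j _; rewrite !mxE iE //.
rewrite !mxE (eq_bigr (fun j => v 0 j * cokermx (AE E) j k)) //; last by move=> j _; rewrite mxE.
by move: Hk; rewrite !mxE.
Qed.

Lemma LA2 (E : {set 'I_m}) (b : 'I_m -> R) :
  (exists y : 'cV[R]_n, forall i, i \in E -> (U *m y) i 0 = b i) \/
  (exists l, [/\ kerv l, (forall i, i \notin E -> l i = 0) & dotv l b != 0]).
Proof.
pose bE : 'rV[R]_m := \row_i (if i \in E then b i else 0).
case: (boolP (bE <= (AE E)^T)%MS) => [/submxP [D HD]|].
  left; exists D^T => i iE.
  have := congr1 (fun M : 'rV[R]_m => M 0 i) HD.
  rewrite /= !mxE iE => ->; apply: eq_bigr => k _; rewrite !mxE iE mulrC //.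
rewrite submxE => Hne; right.
have [k Hk] : exists k, (bE *m cokermx (AE E)^T) 0 k != 0.
  apply/existsP; move: Hne; apply: contraR; rewrite negb_exists => /forallP H.
  apply/eqP/rowP => k; rewrite [RHS]mxE; apply/eqP; move: (H k); rewrite negbK.
  by [].
exists (fun i => if i \in E then cokermx (AE E)^T i k else 0); split.
- apply/rowP => k'; rewrite summxE [RHS]mxE.
  have := congr1 (fun M : 'M[R]_(n,m) => M k' k) (mulmx_coker (AE E)^T).
  rewrite /= !mxE => H; rewrite -[RHS]H; apply: eq_bigr => j _; rewrite !mxE.
  by case: ifP => jE; rewrite ?mul0r // mulrC.
- by move=> i /negbTE ->.
- suff -> : dotv (fun i => if i \in E then cokermx (AE E)^T i k else 0) b
      = (bE *m cokermx (AE E)^T) 0 k by [].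
  rewrite !mxE; apply: eq_bigr => j _; rewrite !mxE.
  by case: ifP => jE; rewrite ?mul0r ?mulr0 // mulrC.
Qed.

Lemma sum_terms (F : 'I_m -> R) : (forall i, 0 <= F i) ->
  0 <= \sum_i F i /\ ((exists i, 0 < F i) -> 0 < \sum_i F i).
Proof.
move=> H; split; first by apply: sumr_ge0.
case=> i Hi; rewrite (bigD1 i) //=.
have : 0 <= \sum_(k | k != i) F k by apply: sumr_ge0.
move=> H2; lra.
Qed.

Lemma sub_sum (P : pred 'I_m) (F : 'I_m -> R) i : P i ->
  (forall k, P k -> 0 <= F k) -> F i <= \sum_(k | P k) F k.
Proof.
move=> Pi H; rewrite (bigD1 i) //=.
have : 0 <= \sum_(k | P k && (k != i)) F k by apply: sumr_ge0 => k /andP [] /H.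
move=> H2; lra.
Qed.

Lemma kerv_lin (l1 l2 : 'I_m -> R) al be : kerv l1 -> kerv l2 ->
  kerv (fun i => al * l1 i + be * l2 i).
Proof.
rewrite /kerv => H1 H2.
under eq_bigr => i _ do rewrite scalerDl -!scalerA.
by rewrite big_split /= -!scaler_sumr H1 H2 !scaler0 addr0.
Qed.

Lemma dotv_lin (l1 l2 : 'I_m -> R) al be b :
  dotv (fun i => al * l1 i + be * l2 i) b = al * dotv l1 b + be * dotv l2 b.
Proof.
rewrite /dotv !mulr_sumr -big_split /=; apply: eq_bigr => i _; ring.
Qed.

Variable sg : 'I_m -> R.
Hypothesis sg2 : forall i, sg i * sg i = 1.

Lemma sg_neq0 i : sg i != 0.
Proof. apply/eqP => H; have := sg2 i; rewrite H mul0r => /eqP; rewrite eq_sym oner_eq0. by []. Qed.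

Lemma prod_sg i l r : l * r = (sg i * l) * (sg i * r).
Proof. by rewrite mulrACA sg2 mul1r. Qed.

Lemma term_ge i l r : 0 <= sg i * l -> 0 <= sg i * r -> 0 <= l * r.
Proof. by move=> H1 H2; rewrite (prod_sg i); apply: mulr_ge0. Qed.

Lemma term_le i l r : sg i * l <= 0 -> sg i * r <= 0 -> 0 <= l * r.
Proof. by move=> H1 H2; rewrite (prod_sg i); apply: mulr_le0. Qed.

Lemma term_gt i l r : 0 <= sg i * l -> 0 < sg i * r -> l != 0 -> 0 < l * r.
Proof.
move=> H1 H2 Hl; rewrite (prod_sg i); apply: mulr_gt0 => //.
by rewrite lt_def H1 andbT mulf_neq0 // sg_neq0.
Qed.

Definition Hcert (E L : {set 'I_m}) (b : 'I_m -> R) :=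
  forall l, kerv l -> (forall i, i \notin E -> i \notin L -> l i = 0) ->
    (forall i, i \in L -> 0 <= sg i * l i) ->
    0 <= dotv l b /\ ((exists2 i, i \in L & l i != 0) -> 0 < dotv l b).

Definition feas (E L : {set 'I_m}) (b : 'I_m -> R) (y : 'cV[R]_n) :=
  (forall i, i \in E -> (U *m y) i 0 = b i) /\
  (forall i, i \in L -> 0 < sg i * (b i - (U *m y) i 0)).


Lemma eps_ok (s h S : R) : 0 < s -> 0 <= S -> `|h| / s <= S ->
  0 < s + (1 + S)^-1 * h.
Proof.
move=> s0 S0; rewrite ler_pdivrMr // => hq.
have hh : - h <= `|h| by rewrite -normrN ler_norm.
have : 0 < (1 + S) * s + h by nra.
have -> : s + (1 + S)^-1 * h = ((1 + S) * s + h) / (1 + S).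
  by field; apply/eqP => E; lra.
move=> H; apply: divr_gt0 => //; lra.
Qed.

Lemma base_case E b : Hcert E set0 b -> exists y, feas E set0 b y.
Proof.
move=> Hb; case: (LA2 E b) => [[y Hy]|[l [kl supp dne]]].
  by exists y; split => // i; rewrite inE.
have [H1 _] := Hb l kl (fun i iE _ => supp i iE) (fun i => ltac:(by rewrite inE)).
have kl' : kerv (fun i => -1 * l i + 0 * l i) by apply: kerv_lin.
have [H2 _] := Hb _ kl' (fun i iE _ => ltac:(by rewrite /= supp // mulr0 mul0r addr0))
  (fun i => ltac:(by rewrite inE)).
move: H2; rewrite dotv_lin => H2.
have : dotv l b = 0 by lra.
by move/eqP; rewrite (negbTE dne).
Qed.

Lemma core N : forall (E L : {set 'I_m}) (b : 'I_m -> R), (#|L| <= N)%N -> [disjoint E & L] ->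
  Hcert E L b -> exists y, feas E L b y.
Proof.
elim: N => [|N IH] E L b HN HEL Hb.
  have L0 : L = set0 by apply: cards0_eq; apply/eqP; rewrite -leqn0.
  by rewrite L0 in Hb *; apply: base_case.
case: (eqVneq L set0) => [L0|/set0Pn [j jL]].
  by rewrite L0 in Hb *; apply: base_case.
have HELf : forall i, i \in E -> (i \in L) = false := fun i => disjointFr HEL.
have jE : j \notin E by apply/negP => /HELf; rewrite jL.
set L' := L :\ j.
have HN' : (#|L'| <= N)%N by move: HN; rewrite (cardsD1 j L) jL.
have HEL' : [disjoint E & L'].
  rewrite -setI_eq0; apply/eqP/setP => i; rewrite !inE.
  by case: (boolP (i \in E)) => // /HELf ->; rewrite andbF.
have HEL'' : [disjoint j |: E & L'].
  rewrite -setI_eq0; apply/eqP/setP => i; rewrite !inE.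
  case: (eqVneq i j) => [->|ij] //=.
  by case: (boolP (i \in E)) => // /HELf ->.
have H1 : Hcert E L' b.
  move=> l kl supp sgn.
  have lj : l j = 0 by apply: supp => //; rewrite !inE eqxx.
  have s1 : forall i, i \notin E -> i \notin L -> l i = 0.
    by move=> i iE iL; apply: supp => //; rewrite !inE negb_and iL orbT.
  have s2 : forall i, i \in L -> 0 <= sg i * l i.
    move=> i iL; case: (eqVneq i j) => [->|ij]; first by rewrite lj mulr0.
    by apply: sgn; rewrite !inE ij.
  have [r1 r2] := Hb l kl s1 s2.
  split => // -[i]; rewrite !inE => /andP [_ iL] li; apply: r2; exists i => //.
have [x' [hxE hxL]] := IH E L' b HN' HEL' H1.
case: (ltrP 0 (sg j * (b j - (U *m x') j 0))) => hxj.
  exists x'; split => // i iL; case: (eqVneq i j) => [->//|ij].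
  by apply: hxL; rewrite !inE ij iL.
have H2 : Hcert (j |: E) L' b.
  move=> l kl supp sgn.
  case: (lerP 0 (sg j * l j)) => slj.
    have s1 : forall i, i \notin E -> i \notin L -> l i = 0.
      move=> i iE iL; have ij : i != j by apply/eqP => ij; rewrite ij jL in iL.
      apply: supp; rewrite !inE ?negb_or ?negb_and ?ij ?iE ?iL //.
    have s2 : forall i, i \in L -> 0 <= sg i * l i.
      move=> i iL; case: (eqVneq i j) => [->//|ij].
      by apply: sgn; rewrite !inE ij.
    have [r1 r2] := Hb l kl s1 s2.
    split => // -[i]; rewrite !inE => /andP [_ iL] li; apply: r2; exists i => //.
  rewrite (dot_res b x' kl).
  have Hnn : forall i, 0 <= l i * (b i - (U *m x') i 0).
    move=> i; case: (boolP (i \in E)) => iE; first by rewrite hxE // subrr mulr0.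
    case: (eqVneq i j) => [->|ij]; first by apply: (@term_le j) => //; apply: ltW.
    case: (boolP (i \in L')) => iL'.
      by apply: (@term_ge i); [apply: sgn | apply: ltW; apply: hxL].
    by rewrite supp ?mul0r // !inE negb_or ij iE.
  have [s1 s2] := sum_terms Hnn.
  split => // -[i iL li]; apply: s2; exists i.
  by apply: (@term_gt i) => //; [apply: sgn | apply: hxL].
have [z [hzE hzL]] := IH (j |: E) L' b HN' HEL'' H2.
have hzj : (U *m z) j 0 = b j by apply: hzE; rewrite !inE eqxx.
case: (LA1 E (row j U)) => [[mu [mu0 Hmu]]|[d [dE dj]]].
  exfalso.
  pose lam i := sg j * ((i == j)%:R - mu i).
  have mj : mu j = 0 by apply: mu0.
  have klam : kerv lam.
    rewrite /kerv /lam.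
    transitivity (\sum_i (sg j *: ((i == j)%:R *: row i U) - sg j *: (mu i *: row i U))).
      by apply: eq_bigr => i _; rewrite mulrBr scalerBl !scalerA.
    rewrite sumrB -!scaler_sumr -Hmu (bigD1 j) //= eqxx scale1r big1 ?addr0.
      by rewrite subrr.
    by move=> i /negbTE ->; rewrite scale0r.
  have supp' : forall i, i \notin E -> i \notin L -> lam i = 0.
    move=> i iE iL; have ij : i != j by apply/eqP => ij; rewrite ij jL in iL.
    by rewrite /lam (negbTE ij) mu0 // subrr mulr0.
  have sgn' : forall i, i \in L -> 0 <= sg i * lam i.
    move=> i iL; case: (eqVneq i j) => [->|ij].
      by rewrite /lam eqxx mj subr0 mulr1 sg2.
    have iE : i \notin E by apply/negP => /HELf; rewrite iL.
    by rewrite /lam (negbTE ij) mu0 // subrr !mulr0.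
  have [_ r2] := Hb lam klam supp' sgn'.
  have pos : 0 < dotv lam b.
    by apply: r2; exists j => //; rewrite /lam eqxx mj subr0 mulr1 sg_neq0.
  have zero : dotv lam b = 0.
    rewrite (dot_res b z klam) big1 // => i _.
    case: (boolP (i \in j |: E)) => iE'; first by rewrite hzE // subrr mulr0.
    move: iE'; rewrite !inE negb_or => /andP [ij iE].
    by rewrite /lam (negbTE ij) mu0 // subrr mulr0 mul0r.
  by rewrite zero ltxx in pos.
set ud := (row j U *m d) 0 0 in dj.
have gj : (U *m d) j 0 = ud.
  by rewrite /ud -row_mul [RHS]mxE.
pose s i := sg i * (b i - (U *m z) i 0).
pose h i := sg i * sg j * ud * (U *m d) i 0.
pose S := \sum_(k in L') `|h k| / s k.
have S0 : 0 <= S.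
  apply: sumr_ge0 => k kL; apply: divr_ge0 => //; apply: ltW; exact: hzL.
pose t := (1 + S)^-1.
have t0 : 0 < t by rewrite invr_gt0; lra.
pose w := z - (t * sg j * ud) *: d.
have Uw : forall i, (U *m w) i 0 = (U *m z) i 0 - t * sg j * ud * (U *m d) i 0.
  by move=> i; rewrite mulmxBr -scalemxAr !mxE.
exists w; split.
  by move=> i iE; rewrite Uw dE // mulr0 subr0; apply: hzE; rewrite !inE iE orbT.
move=> i iL; rewrite Uw; case: (eqVneq i j) => [->|ij].
  rewrite hzj gj.
  have -> : sg j * (b j - (b j - t * sg j * ud * ud)) = t * (ud ^+ 2) * (sg j * sg j).
    by ring.
  rewrite sg2 mulr1; apply: mulr_gt0 => //.
  by rewrite lt_def sqr_ge0 andbT expf_neq0.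
have iL' : i \in L' by rewrite !inE ij iL.
have -> : sg i * (b i - ((U *m z) i 0 - t * sg j * ud * (U *m d) i 0)) = s i + t * h i.
  by rewrite /s /h; ring.
apply: eps_ok; [exact: hzL | exact: S0 |].
apply: (sub_sum (P := fun k => k \in L')) => // k kL.
by apply: divr_ge0 => //; apply: ltW; exact: hzL.
Qed.


Definition spt (l : 'I_m -> R) : {set 'I_m} := [set i | l i != 0].

Definition goodpart (l mu : 'I_m -> R) :=
  [/\ kerv mu, (forall i, 0 <= l i * mu i), (forall i, l i = 0 -> mu i = 0)
    & (#|spt mu| < #|spt l|)%N].

Lemma conf_line (l c : 'I_m -> R) t : (forall i, l i = 0 -> c i = 0) ->
  (forall i, 0 <= (l i / c i) * (l i / c i - t)) ->
  forall i, 0 <= l i * (1 * l i + (- t) * c i).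
Proof.
move=> lc H i; case: (eqVneq (c i) 0) => ci.
  by rewrite ci mulr0 addr0 mul1r -expr2 sqr_ge0.
have -> : l i * (1 * l i + (- t) * c i) = (l i / c i) * (l i / c i - t) * (c i ^+ 2).
  by field.
by apply: mulr_ge0 => //; apply: sqr_ge0.
Qed.

Lemma card_lt (l mu : 'I_m -> R) k : (forall i, l i = 0 -> mu i = 0) ->
  l k != 0 -> mu k = 0 -> (#|spt mu| < #|spt l|)%N.
Proof.
move=> H lk mk; apply: proper_card; apply/properP; split.
  apply/subsetP => i; rewrite !inE; apply: contraNneq => /H ->.
  by [].
by exists k; rewrite !inE ?lk // mk eqxx.
Qed.

Lemma decomp1 (l c : 'I_m -> R) : kerv l -> kerv c ->
  (forall i, l i = 0 -> c i = 0) -> (#|spt c| < #|spt l|)%N ->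
  (exists i, 0 < l i / c i) ->
  exists al be mu1 mu2, [/\ 0 <= al, 0 <= be,
    (forall i, l i = al * mu1 i + be * mu2 i), goodpart l mu1 & goodpart l mu2].
Proof.
move=> kl kc lc card [i0 Hi0].
pose rho i := l i / c i.
have [k Pk Hk] := @min_exists (fun i => 0 < rho i) rho i0 Hi0.
set tp := rho k.
have ck : c k != 0 by apply/eqP => ck; move: Pk; rewrite /rho ck invr0 mulr0 ltxx.
have lk : l k != 0 by apply/eqP => lk; move: Pk; rewrite /rho lk mul0r ltxx.
pose mu2 i := 1 * l i + (- tp) * c i.
have g2 : goodpart l mu2.
  split.
  - exact: kerv_lin.
  - apply: conf_line => // i; case: (ltrP 0 (rho i)) => ri.
      by apply: mulr_ge0; [apply: ltW | rewrite subr_ge0; apply: Hk].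
    by apply: mulr_le0 => //; rewrite subr_le0; apply: le_trans ri _; apply: ltW.
  - by move=> i li; rewrite /mu2 li (lc i li) !mulr0 addr0.
  - apply: (@card_lt _ _ k) => //.
      by move=> i li; rewrite /mu2 li (lc i li) !mulr0 addr0.
    by rewrite /mu2 /tp /rho; field.
case: (boolP [exists i, rho i < 0]) => [/existsP [i1 Hi1]|].
  have [q Pq Hq] := @min_exists (fun i => rho i < 0) (fun i => - rho i) i1 Hi1.
  set tm := rho q.
  have cq : c q != 0 by apply/eqP => cq; move: Pq; rewrite /tm /rho cq invr0 mulr0 ltxx.
  have lq : l q != 0 by apply/eqP => lq; move: Pq; rewrite /tm /rho lq mul0r ltxx.
  pose mu1 i := 1 * l i + (- tm) * c i.
  have g1 : goodpart l mu1.
    split.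
    - exact: kerv_lin.
    - apply: conf_line => // i; case: (ltrP (rho i) 0) => ri.
        apply: mulr_le0; first by apply: ltW.
        by rewrite subr_le0 -lerN2; apply: Hq.
      by apply: mulr_ge0 => //; rewrite subr_ge0; apply: le_trans ri; apply: ltW.
    - by move=> i li; rewrite /mu1 li (lc i li) !mulr0 addr0.
    - apply: (@card_lt _ _ q) => //.
        by move=> i li; rewrite /mu1 li (lc i li) !mulr0 addr0.
      by rewrite /mu1 /tm /rho; field.
  have dpos : 0 < tp - tm by rewrite /tp /tm in Pk Pq *; lra.
  exists (tp / (tp - tm)), (- tm / (tp - tm)), mu1, mu2; split => //.
  - by apply: divr_ge0; [apply: ltW | apply: ltW].
  - by apply: divr_ge0; [rewrite oppr_ge0; apply: ltW | apply: ltW].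
  - move=> i; rewrite /mu1 /mu2; field.
    by apply/eqP => E; rewrite E ltxx in dpos.
rewrite negb_exists => /forallP Hnn.
exists 1, tp, mu2, c; split => //.
- by apply: ltW.
- by move=> i; rewrite /mu2; ring.
split => //.
- move=> i; case: (eqVneq (c i) 0) => ci; first by rewrite ci mulr0.
  have -> : l i * c i = rho i * (c i ^+ 2) by rewrite /rho; field.
  by apply: mulr_ge0; [move: (Hnn i); rewrite -leNgt | apply: sqr_ge0].
Qed.

Lemma decomp (l c : 'I_m -> R) : kerv l -> kerv c ->
  (forall i, l i = 0 -> c i = 0) -> (#|spt c| < #|spt l|)%N ->
  (exists i, c i != 0) ->
  exists al be mu1 mu2, [/\ 0 <= al, 0 <= be,
    (forall i, l i = al * mu1 i + be * mu2 i), goodpart l mu1 & goodpart l mu2].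
Proof.
move=> kl kc lc card [i0 ci0].
have li0 : l i0 != 0 by apply: contra_neq ci0 => /lc.
have r0 : l i0 / c i0 != 0 by rewrite mulf_neq0 // invr_eq0.
case: (ltrP 0 (l i0 / c i0)) => H.
  by apply: (@decomp1 l c) => //; exists i0.
pose c' i := 0 * l i + (-1) * c i.
have sc : spt c' = spt c by apply/setP => i; rewrite !inE /c' mul0r add0r mulN1r oppr_eq0.
apply: (@decomp1 l c') => //.
- exact: kerv_lin.
- by move=> i li; rewrite /c' li (lc i li) !mulr0 addr0.
- by rewrite sc.
- by exists i0; rewrite /c' mul0r add0r mulN1r invrN mulrN oppr_gt0 lt_neqAle r0 H.
Qed.


Lemma mulIr_neq0 (x y : R) : x * y != 0 -> y != 0.
Proof. by apply: contra_neq => ->; rewrite mulr0. Qed.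

Lemma circ_cert (E L : {set 'I_m}) (a b : 'I_m -> R) (x : 'cV[R]_n) :
  (forall i, i \notin E -> i \in L) -> feas E L a x -> same_open_face U a b ->
  Hcert E L b.
Proof.
move=> cov [xE xL] face lam kl0 _ sgn0.
have Afacts : forall l, kerv l -> (forall i, i \in L -> 0 <= sg i * l i) ->
    0 <= dotv l a /\ ((exists2 i, i \in L & l i != 0) -> 0 < dotv l a).
  move=> l kl sgn; rewrite (dot_res a x kl).
  have Hnn : forall i, 0 <= l i * (a i - (U *m x) i 0).
    move=> i; case: (boolP (i \in E)) => iE; first by rewrite xE // subrr mulr0.
    by apply: (@term_ge i); [apply: sgn; apply: cov | apply: ltW; apply: xL; apply: cov].
  have [s1 s2] := sum_terms Hnn.
  split => // -[i iL li]; apply: s2; exists i.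
  by apply: (@term_gt i) => //; [apply: sgn | apply: xL].
suff main : forall N l, (#|spt l| <= N)%N -> kerv l ->
    (forall i, i \in L -> 0 <= sg i * l i) ->
    0 <= dotv l b /\ ((exists2 i, i \in L & l i != 0) -> 0 < dotv l b).
  exact: (main _ lam (leqnn _) kl0 sgn0).
elim=> [|N IH] l Hc kl sgn.
  have S0 : spt l = set0 by apply: cards0_eq; apply/eqP; rewrite -leqn0.
  have l0 : forall i, l i = 0.
    move=> i; apply/eqP; apply/negPn; apply/negP => li.
    have : i \in spt l by rewrite inE.
    by rewrite S0 inE.
  have -> : dotv l b = 0 by rewrite /dotv big1 // => i _; rewrite l0 mul0r.
  by split => // -[i _]; rewrite l0 eqxx.
case: (eqVneq (spt l) set0) => [S0|Sn0].
  have l0 : forall i, l i = 0.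
    move=> i; apply/eqP; apply/negPn; apply/negP => li.
    have : i \in spt l by rewrite inE.
    by rewrite S0 inE.
  have -> : dotv l b = 0 by rewrite /dotv big1 // => i _; rewrite l0 mul0r.
  by split => // -[i _]; rewrite l0 eqxx.
case: (classic (exists T : {set 'I_m}, T \proper spt l /\ lin_dep U T)).
  move=> [T [Tp [c [c0 [i0 ci0] kc]]]].
  have TS : T \subset spt l by move/properP: Tp => [].
  have lc : forall i, l i = 0 -> c i = 0.
    move=> i li; apply: c0; apply/negP => iT.
    by move/subsetP: TS => /(_ i iT); rewrite inE li eqxx.
  have card : (#|spt c| < #|spt l|)%N.
    apply: leq_ltn_trans (proper_card Tp); apply: subset_leq_card.
    by apply/subsetP => i; rewrite inE; apply: contraR => /c0 ->.
  have [al [be [mu1 [mu2 [al0 be0 Hl g1 g2]]]]] := decomp kl kc lc card (ex_intro _ i0 ci0).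
  have useIH : forall mu, goodpart l mu ->
      0 <= dotv mu b /\ ((exists2 i, i \in L & mu i != 0) -> 0 < dotv mu b).
    move=> mu [kmu cmu zmu cardmu]; apply: IH => //.
      by rewrite -ltnS; apply: leq_trans cardmu Hc.
    move=> i iL; case: (eqVneq (l i) 0) => li; first by rewrite zmu // mulr0.
    have lpos : 0 < l i * l i by rewrite lt_def mulf_neq0 //= -expr2 sqr_ge0.
    rewrite -(pmulr_lge0 _ lpos).
    have -> : sg i * mu i * (l i * l i) = (sg i * l i) * (l i * mu i) by ring.
    by apply: mulr_ge0; [apply: sgn | apply: cmu].
  have [p1 q1] := useIH _ g1.
  have [p2 q2] := useIH _ g2.
  have -> : dotv l b = al * dotv mu1 b + be * dotv mu2 b.
    by rewrite -dotv_lin; apply: eq_bigr => i _; rewrite Hl.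
  have t1 := mulr_ge0 al0 p1.
  have t2 := mulr_ge0 be0 p2.
  split; first by lra.
  move=> [i iL li].
  case: (eqVneq (al * mu1 i) 0) => h1.
    have h2 : be * mu2 i != 0 by apply: contra_neq li => h2; rewrite Hl h1 h2 addr0.
    have be1 : 0 < be by rewrite lt_def be0 andbT; move: h2; apply: contra_neq => ->; rewrite mul0r.
    have := mulr_gt0 be1 (q2 (ex_intro2 _ _ i iL (mulIr_neq0 h2))).
    move=> H; lra.
  have al1 : 0 < al by rewrite lt_def al0 andbT; move: h1; apply: contra_neq => ->; rewrite mul0r.
  have := mulr_gt0 al1 (q1 (ex_intro2 _ _ i iL (mulIr_neq0 h1))).
  move=> H; lra.
move=> Hno.
have circ : circuit U (spt l).
  split.
    exists l; split => //.
      by move=> i; rewrite inE negbK => /eqP.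
    by move/set0Pn: Sn0 => [i]; rewrite inE => li; exists i.
  by move=> S SP Hdep; apply: Hno; exists S.
have cv : circuit_vector U (spt l) l by split => // i; rewrite inE.
have fc := face _ _ circ cv.
have [pa sa] := Afacts l kl sgn.
move: pa; rewrite le_eqVlt => /orP [/eqP za|pa].
  have zb : dotv l b = 0.
    by apply/eqP; rewrite -sgr_eq0; rewrite /dotv -fc -/(dotv l a) -za sgr0.
  rewrite zb; split => // Hex; have := sa Hex; by rewrite -za ltxx.
have pb : 0 < dotv l b.
  by rewrite -sgr_gt0 /dotv -fc -/(dotv l a) gtr0_sg // ltr01.
by split => //; apply: ltW.
Qed.

End Core.


Unset Implicit Arguments.

Theorem mainTheorem6 (R : realType) (m n : nat) (U : 'M[R]_(m, n))
  (Hnz : forall i : 'I_m, row i U != 0)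
  (I J K : {set 'I_m}) (Hpart : partition3 I J K)
  (a : 'I_m -> R) (Ha : exists x : 'cV[R]_n, inPring U a I J K x) :
  forall b : 'I_m -> R, same_open_face U a b ->
    exists y : 'cV[R]_n, inPring U b I J K y.
Proof.
move=> b face.
case: Hpart => dIJ dIK dJK cov.
case: Ha => x [xI xJ xK].
pose sg i : R := if i \in K then -1 else 1.
have sg2 : forall i, sg i * sg i = 1.
  by move=> i; rewrite /sg; case: ifP => _; rewrite ?mulN1r ?opprK ?mulr1.
pose L := J :|: K.
have covL : forall i, i \notin I -> i \in L.
  move=> i iI; have : i \in I :|: J :|: K by rewrite cov inE.
  by rewrite !inE (negbTE iI).
have sgJ : forall i, i \in J -> sg i = 1 by move=> i iJ; rewrite /sg (disjointFr dJK iJ).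
have sgK : forall i, i \in K -> sg i = -1 by move=> i iK; rewrite /sg iK.
have feasa : feas U sg I L a x.
  split => // i; rewrite !inE => /orP [iJ|iK].
    by rewrite sgJ // mul1r subr_gt0; apply: xJ.
  by rewrite sgK // mulN1r oppr_gt0 subr_lt0; apply: xK.
have Hc := circ_cert sg2 covL feasa face.
have dIL : [disjoint I & L].
  rewrite -setI_eq0; apply/eqP/setP => i; rewrite !inE.
  case: (boolP (i \in I)) => //= iI.
  by rewrite (disjointFr dIJ iI) (disjointFr dIK iI).
have [y [yI yL]] := core sg2 (leqnn _) dIL Hc.
exists y; split => // i iX.
  by move: (yL i); rewrite !inE iX sgJ // mul1r subr_gt0; apply.
by move: (yL i); rewrite !inE iX orbT sgK // mulN1r oppr_gt0 subr_lt0; apply.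
Qed.
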